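(* Let $K\ge1$, $\delta>1$, $\alpha\in(0,1)$ with $p/n\le\delta^{-1}<1-\alpha$, $\tau>0$, and positive constants $\phi_*,\phi^*$. If $(Y,X)\in U$ and $X\in U_x$, then $$\frac1n\sum_{i=1}^nH_i\otimes(x_ix_i^T)\succeq c_1(I_K\otimes\Sigma),$$ where $c_1>0$ depends only on $(K,\tau,\alpha,\phi_* )$.
   Context: $\Sigma\in\mathbb{R}^{p\times p}$ is positive definite; $x_i^T$ are the rows of $X\in\mathbb{R}^{n\times p}$; $Y$ has rows $\mathsf y_i\in\mathbb{R}^{K+1}$. $\mathcal L_i(u)=-\sum_k\mathsf y_{ik}u_k+\log\sum_{k'}e^{u_{k'}}$, $\hat{\mathsf B}\in\arg\min_{\mathsf B\in\mathbb{R}^{p\times(K+1)}}\sum_i\mathcal L_i(\mathsf B^Tx_i)$, $U=\{(Y,X):\hat{\mathsf B}\text{ exists},\ \|X\hat{\mathsf B}(I_{K+1}-\frac{\mathbf 1\mathbf 1^T}{K+1})\|_F^2<n\tau\}$. $\mathcal I=\{I\subset[n]:|I|=\lceil n(1-\alpha)\rceil\}$, $P_I=\sum_{i\in I}e_ie_i^T$, $U_x=\{X:\min_{I\in\mathcal I}\lambda_{\min}(\frac1n\Sigma^{-1/2}X^TP_IX\Sigma^{-1/2})\ge\phi_*^2,\ \frac1{\sqrt n}\|X\Sigma^{-1/2}\|_{op}\le\phi^*\}$. $Q\in\mathbb{R}^{(K+1)\times K}$ with $QQ^T=I_{K+1}-\frac{1}{K+1}\mathbf 1\mathbf 1^T$,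 $Q^TQ=I_K$; $L_i(u)=\mathcal L_i(Qu)$; $\hat B=\hat{\mathsf B}Q$; $H_i=\nabla^2L_i(\hat B^Tx_i)$. *)

(* Defs.v *)
From HB Require Import structures.
From mathcomp Require Import all_boot all_order all_algebra.
From mathcomp Require Import all_classical all_reals all_analysis.
From mathcomp Require Import mxtens.
Set Implicit Arguments. Unset Strict Implicit. Unset Printing Implicit Defensive.
Import Order.TTheory GRing.Theory Num.Theory.
Import numFieldNormedType.Exports.
Local Open Scope ring_scope.

Section Defs.
Variable R : realType.

Definition mlogit_loss (m : nat) (y u : 'rV[R]_m) : R :=
  - (\sum_(k < m) y 0 k * u 0 k) + ln (\sum_(k < m) expR (u 0 k)).

(* sum_i L_i(B^T x_i), with x_i^T = row i X and y_i^T = row i Y *)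
Definition mlogit_obj (n p m : nat) (Y : 'M[R]_(n, m)) (X : 'M[R]_(n, p))
  (B : 'M[R]_(p, m)) : R :=
  \sum_(i < n) mlogit_loss (row i Y) (row i X *m B).

Definition is_argmin_mlogit (n p m : nat) (Y : 'M[R]_(n, m)) (X : 'M[R]_(n, p))
  (B : 'M[R]_(p, m)) : Prop :=
  forall B' : 'M[R]_(p, m), mlogit_obj Y X B <= mlogit_obj Y X B'.

Definition centering_mx (m : nat) : 'M[R]_m :=
  1%:M - (m%:R)^-1 *: const_mx 1.

Definition frob2 (a b : nat) (A : 'M[R]_(a, b)) : R :=
  \sum_(i < a) \sum_(j < b) A i j ^+ 2.

Definition vnorm (a : nat) (v : 'cV[R]_a) : R :=
  Num.sqrt (\sum_(i < a) v i 0 ^+ 2).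

Definition qform (a : nat) (M : 'M[R]_a) (v : 'cV[R]_a) : R :=
  (v^T *m M *m v) 0 0.

Definition sym_mx (a : nat) (M : 'M[R]_a) : Prop := M^T = M.

Definition posdef (a : nat) (M : 'M[R]_a) : Prop :=
  sym_mx M /\ forall v : 'cV[R]_a, v != 0 -> 0 < qform M v.

Definition loewner_ge (a : nat) (A B : 'M[R]_a) : Prop :=
  forall v : 'cV[R]_a, 0 <= qform (A - B) v.

(* lambda_min(M) >= c, with lambda_min(M) = min_{|v|=1} v^T M v (M symmetric) *)
Definition lambda_min_ge (a : nat) (M : 'M[R]_a) (c : R) : Prop :=
  forall v : 'cV[R]_a, vnorm v = 1 -> c <= qform M v.

Definition opnorm_le (a b : nat) (A : 'M[R]_(a, b)) (c : R) : Prop :=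
  forall v : 'cV[R]_b, vnorm (A *m v) <= c * vnorm v.

Definition proj_idx (n : nat) (I : {set 'I_n}) : 'M[R]_n :=
  \sum_(i in I) delta_mx i i.

Definition hessian (K : nat) (f : 'rV[R]_K -> R) (u : 'rV[R]_K) : 'M[R]_K :=
  \matrix_(j < K, k < K)
    derive (fun w => derive f w (delta_mx 0 j)) u (delta_mx 0 k).

End Defs.

(* Main.v *)
Require Import Defs.
From HB Require Import structures.
From mathcomp Require Import all_boot all_order all_algebra.
From mathcomp Require Import all_classical all_reals all_analysis.
From mathcomp Require Import mxtens.
From mathcomp Require Import ring lra zify.
Import Order.TTheory GRing.Theory Num.Theory.
Import numFieldNormedType.Exports.
Local Open Scope ring_scope.
Set Implicit Arguments. Unset Strict Implicit. Unset Printing Implicit Defensive.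

Section B.
Variable R : realFieldType.

Lemma quad_expand m K (E : 'I_m -> R) (S : R) (Q : 'I_m -> 'I_K -> R) (w : 'I_K -> R) :
  \sum_(j < K) \sum_(k < K) w j * ((\sum_(l < m) E l * (Q l k * Q l j)) / S
     - (\sum_(l < m) E l * Q l j) * (\sum_(l < m) E l * Q l k) / S ^+ 2) * w k
  = (\sum_(l < m) E l * (\sum_(j < K) Q l j * w j) ^+ 2) / S
     - (\sum_(l < m) E l * (\sum_(j < K) Q l j * w j)) ^+ 2 / S ^+ 2.
Proof.
have -> : \sum_(j < K) \sum_(k < K) w j * ((\sum_(l < m) E l * (Q l k * Q l j)) / S
     - (\sum_(l < m) E l * Q l j) * (\sum_(l < m) E l * Q l k) / S ^+ 2) * w k
  = (\sum_(j < K) \sum_(k < K) \sum_(l < m) E l * (Q l j * w j) * (Q l k * w k)) / S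
    - (\sum_(j < K) \sum_(k < K) (\sum_(l < m) E l * (Q l j * w j)) * (\sum_(l < m) E l * (Q l k * w k))) / S ^+ 2.
  rewrite !mulr_suml -sumrB; apply: eq_bigr => j _.
  rewrite !mulr_suml -sumrB; apply: eq_bigr => k _.
  have e1 : \sum_(l < m) E l * (Q l j * w j) * (Q l k * w k) = (\sum_(l < m) E l * (Q l k * Q l j)) * (w j * w k).
    by rewrite mulr_suml; apply: eq_bigr => l _; ring.
  have e2 : forall i, \sum_(l < m) E l * (Q l i * w i) = (\sum_(l < m) E l * Q l i) * w i.
    by move=> i; rewrite mulr_suml; apply: eq_bigr => l _; ring.
  rewrite e1 !e2; ring.
congr (_ / _ - _ / _).
  rewrite (eq_bigr (fun j => \sum_(l < m) \sum_(k < K) E l * (Q l j * w j) * (Q l k * w k))); last first.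
    by move=> j _; exact: exchange_big.
  rewrite exchange_big /=; apply: eq_bigr => l _.
  rewrite expr2 mulr_suml mulr_sumr; apply: eq_bigr => j _.
  rewrite !mulr_sumr; apply: eq_bigr => k _; ring.
have e3 : \sum_(l < m) E l * (\sum_(j < K) Q l j * w j) = \sum_(j < K) \sum_(l < m) E l * (Q l j * w j).
  by rewrite exchange_big /=; apply: eq_bigr => l _; rewrite mulr_sumr.
rewrite e3 expr2 mulr_suml; apply: eq_bigr => j _.
by rewrite mulr_sumr.
Qed.


Lemma var_bound m (E v : 'I_m -> R) (pm : R) :
  0 < \sum_(l < m) E l -> 0 <= pm ->
  (forall l, pm * (\sum_(l < m) E l) <= E l) -> \sum_(l < m) v l = 0 ->
  pm * \sum_(l < m) v l ^+ 2 <=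
  (\sum_(l < m) E l * v l ^+ 2) / (\sum_(l < m) E l)
   - (\sum_(l < m) E l * v l) ^+ 2 / (\sum_(l < m) E l) ^+ 2.
Proof.
set S := \sum_(l < m) E l => S0 pm0 Epm v0.
set mu := (\sum_(l < m) E l * v l) / S.
have id : (\sum_(l < m) E l * v l ^+ 2) / S - (\sum_(l < m) E l * v l) ^+ 2 / S ^+ 2
   = \sum_(l < m) E l / S * (v l - mu) ^+ 2.
  rewrite [RHS](eq_bigr (fun l => E l * v l ^+ 2 / S - (2 * mu / S) * (E l * v l) + mu ^+ 2 / S * E l)); last first.
    by move=> l _; ring.
  rewrite big_split sumrB /= -!mulr_sumr -mulr_suml -/S /mu.
  by field; rewrite gt_eqF.
rewrite id.
apply: (@le_trans _ _ (pm * \sum_(l < m) (v l - mu) ^+ 2)).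
  rewrite ler_wpM2l //.
  rewrite [X in _ <= X](eq_bigr (fun l => v l ^+ 2 - (2 * mu) * v l + mu ^+ 2)); last by move=> l _; ring.
  rewrite big_split sumrB /= -mulr_sumr v0 mulr0 subr0 sumr_const card_ord lerDl.
  by rewrite mulrn_wge0 // sqr_ge0.
rewrite mulr_sumr; apply: ler_sum => l _.
rewrite ler_wpM2r ?sqr_ge0 // ler_pdivlMr //.
Qed.


Lemma colsum0 m K (Q : 'M[R]_(m.+1, K)) :
  Q *m Q^T = 1%:M - (m.+1%:R)^-1 *: const_mx 1 -> forall j, \sum_(l < m.+1) Q l j = 0.
Proof.
move=> HQ.
have H2 : \sum_(j < K) (\sum_(l < m.+1) Q l j) ^+ 2 = 0.
  have -> : \sum_(j < K) (\sum_(l < m.+1) Q l j) ^+ 2 =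
     \sum_(l < m.+1) \sum_(l' < m.+1) (Q *m Q^T) l l'.
    rewrite (eq_bigr (fun j => \sum_(l < m.+1) \sum_(l' < m.+1) Q l j * Q l' j)); last first.
      by move=> j _; rewrite expr2 mulr_suml; apply: eq_bigr => l _; rewrite mulr_sumr.
    rewrite exchange_big /=; apply: eq_bigr => l _.
    rewrite exchange_big /=; apply: eq_bigr => l' _.
    by rewrite !mxE; apply: eq_bigr => j _; rewrite mxE.
  rewrite HQ.
  rewrite (eq_bigr (fun l => 1 - 1)); first by rewrite big1 // => l _; rewrite subrr.
  move=> l _; rewrite (eq_bigr (fun l' => (1%:M : 'M[R]_m.+1) l l' - (m.+1%:R)^-1)); last first.
    by move=> l' _; rewrite !mxE mulr1.
  rewrite sumrB; congr (_ - _).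
    rewrite (bigD1 l) //= big1 ?addr0; first by rewrite !mxE eqxx.
    by move=> l' /negPf ne; rewrite !mxE eq_sym ne.

  by rewrite sumr_const card_ord -[LHS]mulr_natr mulVf // pnatr_eq0.
move=> j.
have /psumr_eq0P H3 := H2.
have : (\sum_(l < m.+1) Q l j) ^+ 2 = 0 by apply: H3 => // i _; exact: sqr_ge0.
by move/eqP; rewrite sqrf_eq0 => /eqP.
Qed.

Lemma normQ m K (Q : 'M[R]_(m, K)) (w : 'I_K -> R) :
  Q^T *m Q = 1%:M ->
  \sum_(l < m) (\sum_(j < K) Q l j * w j) ^+ 2 = \sum_(j < K) w j ^+ 2.
Proof.
move=> HQ.
have -> : \sum_(l < m) (\sum_(j < K) Q l j * w j) ^+ 2 =
   \sum_(j < K) \sum_(k < K) w j * w k * (Q^T *m Q) j k.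
  rewrite (eq_bigr (fun l => \sum_(j < K) \sum_(k < K) Q l j * w j * (Q l k * w k))); last first.
    by move=> l _; rewrite expr2 mulr_suml; apply: eq_bigr => j _; rewrite mulr_sumr.
  rewrite exchange_big /=; apply: eq_bigr => j _.
  rewrite exchange_big /=; apply: eq_bigr => k _.
  rewrite !mxE mulr_sumr; apply: eq_bigr => l _; rewrite mxE; ring.
rewrite HQ; apply: eq_bigr => j _.
rewrite (bigD1 j) //= big1 ?addr0; first by rewrite !mxE eqxx mulr1 expr2.
by move=> k /negPf ne; rewrite !mxE eq_sym ne mulr0.
Qed.

Lemma sumv0 m K (Q : 'M[R]_(m, K)) (w : 'I_K -> R) :
  (forall j, \sum_(l < m) Q l j = 0) -> \sum_(l < m) \sum_(j < K) Q l j * w j = 0.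
Proof.
move=> H; rewrite exchange_big big1 // => j _.
by rewrite -mulr_suml H mul0r.
Qed.

End B.

Section A.
Variable R : realType.

Lemma derive_dir (K : nat) (f : 'rV[R]_K -> R) (a v : 'rV[R]_K) :
  derive f a v = derive (fun t : R => f (a + t *: v)) 0 1.
Proof.
rewrite /derive /= scale0r addr0.
suff -> : (fun h : R => h^-1 *: (f (a + (h%:A + 0) *: v) - f a)) = (fun h : R => h^-1 *: (f (h *: v + a) - f a)) by [].
apply/funext => h; rewrite addr0 [a + _]addrC -[h%:A]/(h * 1) mulr1.
by [].
Qed.

Lemma is_derive_ext {V W : normedModType R} (f g : V -> W) x v df :
  f =1 g -> is_derive x v f df -> is_derive x v g df.
Proof. by move=> /funext ->. Qed.

Lemma is_derive_aff (a b t : R) : is_derive t 1 (fun s : R => a + s * b) b.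
Proof.
have := is_deriveD (is_derive_cst a t 1) (is_deriveZ b (is_derive_id t 1)).
move=> H; have H2 := is_derive_eq H (_ : _ = b).
eapply is_derive_ext. 2: apply: H2.
  by move=> s /=; rewrite mulrC.
by rewrite add0r -[b%:A]/(b * 1) mulr1.
Qed.

Lemma is_derive_expaff (a b t : R) :
  is_derive t 1 (fun s : R => expR (a + s * b)) (expR (a + t * b) * b).
Proof.
have -> : (fun s : R => expR (a + s * b)) = expR \o (fun s : R => a + s * b) by [].
apply: is_derive1_comp.
exact: is_derive_aff.
Qed.

Lemma is_derive_bigsum m (F : 'I_m -> R -> R) (dF : 'I_m -> R) (t : R) :
  (forall l, is_derive t 1 (F l) (dF l)) ->
  is_derive t 1 (fun s => \sum_(l < m) F l s) (\sum_(l < m) dF l).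
Proof.
move=> H.
have -> : (fun s => \sum_(l < m) F l s) = \sum_(l < m) F l.
  by apply/funext => s; rewrite fct_sumE.
exact: is_derive_sum.
Qed.


Lemma is_derive_ln_comp (S : R -> R) (dS t : R) : 0 < S t ->
  is_derive t 1 S dS -> is_derive t 1 (fun s => ln (S s)) ((S t)^-1 * dS).
Proof.
move=> St HS.
have -> : (fun s => ln (S s)) = (@ln R) \o S by [].
exact: (is_derive1_comp (is_derive1_ln St) HS).
Qed.

Lemma is_derive_div (N S : R -> R) (dN dS t : R) : S t != 0 ->
  is_derive t 1 N dN -> is_derive t 1 S dS ->
  is_derive t 1 (fun s => N s / S s) (dN / S t - N t * dS / (S t ^+ 2)).
Proof.
move=> St HN HS.
have HV := is_deriveV St HS.
have H := is_deriveM HN HV.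
eapply is_derive_ext. 2: apply: (is_derive_eq H).
  by move=> s.
rewrite /GRing.scale /= expr2 invfM; ring.
Qed.

Lemma is_derive_scal (F : R -> R) (dF c t : R) :
  is_derive t 1 F dF -> is_derive t 1 (fun s => F s * c) (dF * c).
Proof.
move=> H; have H2 := is_deriveZ c H.
eapply is_derive_ext. 2: apply: (is_derive_eq H2).
  by move=> s /=; rewrite mulrC.
by rewrite /GRing.scale /= mulrC.
Qed.

Lemma is_derive_const_add (F : R -> R) (dF c t : R) :
  is_derive t 1 F dF -> is_derive t 1 (fun s => c + F s) dF.
Proof.
move=> H; have H2 := is_deriveD (is_derive_cst c t 1) H.
eapply is_derive_ext. 2: apply: (is_derive_eq H2).
  by move=> s.
by rewrite add0r.
Qed.

Lemma is_derive_add (F G : R -> R) (dF dG t : R) :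
  is_derive t 1 F dF -> is_derive t 1 G dG -> is_derive t 1 (fun s => F s + G s) (dF + dG).
Proof.
move=> H H'; have H2 := is_deriveD H H'.
eapply is_derive_ext. 2: apply: H2.
by move=> s.
Qed.

Lemma is_derive_opp (F : R -> R) (dF t : R) :
  is_derive t 1 F dF -> is_derive t 1 (fun s => - F s) (- dF).
Proof.
move=> H; have H2 := is_deriveN H.
eapply is_derive_ext. 2: apply: H2.
by move=> s.
Qed.

Definition sexp m (a b : 'I_m -> R) (s : R) := \sum_(l < m) expR (a l + s * b l).
Definition nexp m (a b c : 'I_m -> R) (s : R) := \sum_(l < m) expR (a l + s * b l) * c l.

Lemma sexp_gt0 m (a b : 'I_m -> R) s : (0 < m)%N -> 0 < sexp a b s.
Proof.
move=> m0; rewrite /sexp (bigD1 (Ordinal m0)) //=.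
by rewrite ltr_pwDl ?expR_gt0 // sumr_ge0 // => l _; rewrite expR_ge0.
Qed.

Lemma is_derive_nexp m (a b c : 'I_m -> R) (t : R) :
  is_derive t 1 (nexp a b c) (nexp a b (fun l => b l * c l) t).
Proof.
rewrite /nexp.
have -> : (fun s => \sum_(l < m) expR (a l + s * b l) * c l) = (fun s => \sum_(l < m) (fun l s => expR (a l + s * b l) * c l) l s) by [].
apply: is_derive_eq.
  apply: (@is_derive_bigsum _ (fun l s => expR (a l + s * b l) * c l) (fun l => expR (a l + t * b l) * b l * c l)).
  move=> l /=; apply: is_derive_scal; exact: is_derive_expaff.
by apply: eq_bigr => l _; rewrite mulrA.
Qed.

Lemma is_derive_sexp m (a b : 'I_m -> R) (t : R) :
  is_derive t 1 (sexp a b) (nexp a b b t).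
Proof.
rewrite /sexp.
apply: is_derive_bigsum => l; exact: is_derive_expaff.
Qed.

Lemma is_derive_loss1 m (y a b : 'I_m -> R) (t : R) : (0 < m)%N ->
  is_derive t 1 (fun s => - (\sum_(l < m) y l * (a l + s * b l)) + ln (sexp a b s))
     (- (\sum_(l < m) y l * b l) + nexp a b b t / sexp a b t).
Proof.
move=> m0.
apply: is_derive_add; last first.
  rewrite mulrC; apply: is_derive_ln_comp; first exact: sexp_gt0.
  exact: is_derive_sexp.
apply: is_derive_opp.
apply: (@is_derive_bigsum _ (fun l s => y l * (a l + s * b l)) (fun l => y l * b l)) => l.
have H := is_derive_scal (y l) (is_derive_aff (a l) (b l) t).
eapply is_derive_ext. 2: apply: (is_derive_eq H).
  by move=> s; rewrite mulrC.
by rewrite mulrC.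
Qed.


Lemma is_derive_loss2 m (y a b c : 'I_m -> R) (t : R) : (0 < m)%N ->
  is_derive t 1 (fun s => - (\sum_(l < m) y l * b l) + nexp a c b s / sexp a c s)
     (nexp a c (fun l => c l * b l) t / sexp a c t
        - nexp a c b t * nexp a c c t / (sexp a c t ^+ 2)).
Proof.
move=> m0.
apply: is_derive_const_add.
apply: is_derive_div; first by rewrite gt_eqF // sexp_gt0.
  exact: is_derive_nexp.
exact: is_derive_sexp.
Qed.

Definition S0 m (a : 'I_m -> R) := \sum_(l < m) expR (a l).
Definition N0 m (a b : 'I_m -> R) := \sum_(l < m) expR (a l) * b l.

Lemma dloss1 (K : nat) (Q : 'M[R]_(K.+1, K)) (y : 'rV[R]_K.+1) (w e : 'rV[R]_K) :
  derive (fun u : 'rV[R]_K => mlogit_loss y (u *m Q^T)) w e =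
  - (\sum_(l < K.+1) y 0 l * (e *m Q^T) 0 l)
  + N0 (fun l => (w *m Q^T) 0 l) (fun l => (e *m Q^T) 0 l) / S0 (fun l => (w *m Q^T) 0 l).
Proof.
rewrite derive_dir.
have -> : (fun t : R => mlogit_loss y ((w + t *: e) *m Q^T)) =
  (fun s => - (\sum_(l < K.+1) y 0 l * ((w *m Q^T) 0 l + s * (e *m Q^T) 0 l))
     + ln (sexp (fun l => (w *m Q^T) 0 l) (fun l => (e *m Q^T) 0 l) s)).
  apply/funext => s; rewrite /mlogit_loss /sexp mulmxDl -scalemxAl.
  by congr (- _ + ln _); apply: eq_bigr => l _; rewrite !mxE.
rewrite (@derive_val _ _ _ _ _ _ _ (is_derive_loss1 (fun l => y 0 l) (fun l => (w *m Q^T) 0 l) (fun l => (e *m Q^T) 0 l) 0 (ltn0Sn K))).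
rewrite /nexp /sexp /N0 /S0.
congr (_ + _ / _); apply: eq_bigr => l _; by rewrite mul0r addr0.
Qed.


Lemma hess_entry (K : nat) (Q : 'M[R]_(K.+1, K)) (y : 'rV[R]_K.+1) (u : 'rV[R]_K) j k :
  hessian (fun w : 'rV[R]_K => mlogit_loss y (w *m Q^T)) u j k =
  let a := fun l => (u *m Q^T) 0 l in
  N0 a (fun l => Q l k * Q l j) / S0 a - N0 a (fun l => Q l j) * N0 a (fun l => Q l k) / (S0 a ^+ 2).
Proof.
have dQ : forall (i : 'I_K) (l : 'I_K.+1), ((delta_mx (0 : 'I_1) i : 'rV[R]_K) *m Q^T) 0 l = Q l i.
  move=> i l; rewrite mxE (bigD1 i) //= big1 ?addr0.
    by rewrite !mxE !eqxx mul1r.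
  by move=> i' ne; rewrite !mxE (negPf ne) andbF mul0r.
rewrite /hessian mxE.
have -> : (fun w : 'rV[R]_K => derive (fun u0 : 'rV[R]_K => mlogit_loss y (u0 *m Q^T)) w (delta_mx 0 j)) =
  (fun w => - (\sum_(l < K.+1) y 0 l * Q l j) + N0 (fun l => (w *m Q^T) 0 l) (fun l => Q l j) / S0 (fun l => (w *m Q^T) 0 l)).
  apply/funext => w; rewrite dloss1.
  have -> : (fun l : 'I_K.+1 => ((delta_mx 0 j : 'rV[R]_K) *m Q^T) 0 l) = (fun l => Q l j) by apply/funext => l; rewrite dQ.
  by congr (- _ + _); apply: eq_bigr => l _; rewrite dQ.
rewrite derive_dir.
have -> : (fun t : R => - (\sum_(l < K.+1) y 0 l * Q l j) + N0 (fun l => ((u + t *: delta_mx 0 k) *m Q^T) 0 l) (fun l => Q l j) / S0 (fun l => ((u + t *: delta_mx 0 k) *m Q^T) 0 l)) =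
  (fun s => - (\sum_(l < K.+1) (fun l => y 0 l) l * (fun l => Q l j) l) + nexp (fun l => (u *m Q^T) 0 l) (fun l => Q l k) (fun l => Q l j) s / sexp (fun l => (u *m Q^T) 0 l) (fun l => Q l k) s).
  apply/funext => s; rewrite /N0 /S0 /nexp /sexp.
  by congr (_ + _ / _); apply: eq_bigr => l _; rewrite mulmxDl -scalemxAl !mxE -(dQ k l) !mxE.
rewrite (@derive_val _ _ _ _ _ _ _ (is_derive_loss2 (fun l => y 0 l) (fun l => (u *m Q^T) 0 l) (fun l => Q l j) (fun l => Q l k) 0 (ltn0Sn K))).
rewrite /nexp /sexp /N0 /S0 /=.
by congr (_ / _ - _ * _ / (_ ^+ 2)); apply: eq_bigr => l _; rewrite mul0r addr0.
Qed.

End A.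

Section C.
Variable R : realType.

Lemma card_sub (T : finType) (G : {set T}) k : (k <= #|G|)%N ->
  exists I : {set T}, I \subset G /\ #|I| = k.
Proof.
elim: k => [|k IH] hk.
  by exists (finset.set0 : {set T}); split; [exact: finset.sub0set | exact: finset.cards0].
have [I [sIG cI]] := IH (ltnW hk).
have : (0 < #|G :\: I|)%N by rewrite cardsD (finset.setIidPr sIG) cI subn_gt0.
case/card_gt0P => x; rewrite inE => /andP [xnI xG].
exists (x |: I); split; first by rewrite finset.subUset finset.sub1set xG sIG.
by rewrite cardsU1 xnI cI.
Qed.

Lemma qformE a (M : 'M[R]_a) v :
  qform M v = \sum_(i < a) \sum_(j < a) v i 0 * M i j * v j 0.
Proof.
rewrite /qform mxE exchange_big /=; apply: eq_bigr => j _.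
rewrite mxE mulr_suml; apply: eq_bigr => i _; by rewrite mxE.
Qed.

Lemma qformB a (A B : 'M[R]_a) v : qform (A - B) v = qform A v - qform B v.
Proof. by rewrite /qform mulmxBr mulmxBl !mxE. Qed.

Lemma qformZ a (A : 'M[R]_a) c v : qform (c *: A) v = c * qform A v.
Proof. by rewrite /qform -scalemxAr -scalemxAl mxE. Qed.

Lemma qform_sum a n (A : 'I_n -> 'M[R]_a) v : qform (\sum_(i < n) A i) v = \sum_(i < n) qform (A i) v.
Proof. by rewrite /qform mulmx_sumr mulmx_suml summxE. Qed.

Lemma sum_tens m p (F : 'I_(m * p) -> R) :
  \sum_(a < m * p) F a = \sum_(j < m) \sum_(l < p) F (mxtens_index (j, l)).
Proof.
rewrite pair_big /=.
rewrite (reindex (fun ij : 'I_m * 'I_p => mxtens_index ij)) /=; last first.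
  by exists (@mxtens_unindex m p) => x _; [rewrite mxtens_indexK | rewrite mxtens_unindexK].
by apply: eq_bigr => -[j l].
Qed.


Lemma qform_tens K p (A : 'M[R]_K) (B : 'M[R]_p) v :
  qform (A *t B) v = \sum_(j < K) \sum_(l < p) \sum_(k < K) \sum_(m < p)
     v (mxtens_index (j, l)) 0 * (A j k * B l m) * v (mxtens_index (k, m)) 0.
Proof.
rewrite qformE sum_tens; apply: eq_bigr => j _; apply: eq_bigr => l _.
rewrite sum_tens; apply: eq_bigr => k _; apply: eq_bigr => m _.
by rewrite tensmxE.
Qed.

Lemma qform_tens1 K p (A : 'M[R]_K) (x : 'rV[R]_p) v :
  qform (A *t (x^T *m x)) v = \sum_(j < K) \sum_(k < K)
    (\sum_(l < p) v (mxtens_index (j, l)) 0 * x 0 l) * A j k *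
    (\sum_(m < p) v (mxtens_index (k, m)) 0 * x 0 m).
Proof.
rewrite qform_tens; apply: eq_bigr => j _.
rewrite exchange_big /=; apply: eq_bigr => k _.
rewrite mulr_suml mulr_suml; apply: eq_bigr => l _.
rewrite mulr_sumr; apply: eq_bigr => m _.
rewrite mxE big_ord1 !mxE; ring.
Qed.

Lemma qform_tens_id K p (Sg : 'M[R]_p) v :
  qform ((1%:M : 'M[R]_K) *t Sg) v =
  \sum_(j < K) qform Sg (\col_(l < p) v (mxtens_index (j, l)) 0).
Proof.
rewrite qform_tens; apply: eq_bigr => j _.
rewrite qformE; apply: eq_bigr => l _.
rewrite [LHS](bigD1 j) //= [X in _ + X]big1 ?addr0.
  by apply: eq_bigr => m _; rewrite !mxE eqxx mul1r.
by move=> k /negPf ne; apply: big1 => m _; rewrite !mxE eq_sym ne mul0r mulr0 mul0r.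
Qed.


Lemma qform_scalev a (M : 'M[R]_a) c w : qform M (c *: w) = c ^+ 2 * qform M w.
Proof.
rewrite !qformE mulr_sumr; apply: eq_bigr => i _.
rewrite mulr_sumr; apply: eq_bigr => j _; rewrite !mxE; ring.
Qed.

Lemma qform_delta n (i : 'I_n) (z : 'cV[R]_n) : qform (delta_mx i i) z = z i 0 ^+ 2.
Proof.
rewrite qformE (bigD1 i) //=.
rewrite [X in _ + X]big1 ?addr0; last first.
  by move=> k /negPf ne; apply: big1 => m _; rewrite !mxE ne mulr0 mul0r.
rewrite (bigD1 i) //= [X in _ + X]big1 ?addr0; last first.
  by move=> k /negPf ne; rewrite !mxE ne andbF mulr0 mul0r.
by rewrite !mxE !eqxx mulr1 expr2.
Qed.

Lemma qform_proj n (I : {set 'I_n}) (z : 'cV[R]_n) : qform (proj_idx R I) z = \sum_(i in I) z i 0 ^+ 2.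
Proof.
rewrite /proj_idx /qform mulmx_sumr mulmx_suml summxE; apply: eq_bigr => i _.
by rewrite -qform_delta.
Qed.

Lemma posdef_unit a (M : 'M[R]_a) : posdef M -> M \in unitmx.
Proof.
move=> [sM pM]; rewrite -row_free_unit; apply: inj_row_free => v vM.
apply/eqP; apply/negP => /negP vn0.
have : v^T != 0.
  by apply: contra vn0 => /eqP h; apply/eqP; rewrite -[v]trmxK h trmx0.
move/pM; rewrite /qform trmxK vM mul0mx mxE.
by rewrite ltxx.
Qed.


Lemma qform1 a (w : 'cV[R]_a) : qform 1%:M w = \sum_(i < a) w i 0 ^+ 2.
Proof.
rewrite qformE; apply: eq_bigr => i _.
rewrite (bigD1 i) //= [X in _ + X]big1 ?addr0; last first.
  by move=> k /negPf ne; rewrite !mxE eq_sym ne mulr0 mul0r.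
by rewrite !mxE eqxx mulr1 expr2.
Qed.

Lemma qform_ge0_sq a (M : 'M[R]_a) (phi2 : R) (w : 'cV[R]_a) :
  0 <= qform M w -> lambda_min_ge M phi2 ->
  phi2 * \sum_(i < a) w i 0 ^+ 2 <= qform M w.
Proof.
move=> q0 hl.
set s := \sum_(i < a) w i 0 ^+ 2.
have s0 : 0 <= s by apply: sumr_ge0 => i _; exact: sqr_ge0.
have [->|sp] := eqVneq s 0; first by rewrite mulr0.
have sgt : 0 < s by rewrite lt_def sp s0.
set c := (Num.sqrt s)^-1.
have c2 : c ^+ 2 = s^-1 by rewrite /c exprVn sqr_sqrtr.
have := hl (c *: w).
rewrite qform_scalev c2.
have -> : vnorm (c *: w) = 1.
  rewrite /vnorm (eq_bigr (fun i => c ^+ 2 * w i 0 ^+ 2)); last by move=> i _; rewrite mxE exprMn.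
  by rewrite -mulr_sumr c2 -/s mulVf // sqrtr1.
move=> /(_ erefl) h.
by rewrite -ler_pdivlMr // mulrC.
Qed.

Lemma lammin_apply n p (Sigma S : 'M[R]_p) (X : 'M[R]_(n, p)) (I : {set 'I_n}) (phi : R) :
  (0 < n)%N -> posdef Sigma -> posdef S -> S *m S = invmx Sigma ->
  lambda_min_ge ((n%:R)^-1 *: (S *m X^T *m proj_idx R I *m X *m S)) (phi ^+ 2) ->
  forall u : 'cV[R]_p, n%:R * phi ^+ 2 * qform Sigma u <= \sum_(i in I) (X *m u) i 0 ^+ 2.
Proof.
move=> n0 pSg pS SS hl u.
have uS := posdef_unit pS; have uSg := posdef_unit pSg.
have symS : S^T = S by case: pS.
set w := invmx S *m u.
have uw : u = S *m w by rewrite /w mulKVmx.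
have key : qform (S *m X^T *m proj_idx R I *m X *m S) w = \sum_(i in I) (X *m u) i 0 ^+ 2.
  rewrite -qform_proj /qform uw !trmx_mul symS !mulmxA.
  done.
have SSS : S *m Sigma *m S = 1%:M.
  have -> : S *m Sigma *m S = invmx S *m (S *m S) *m Sigma *m S.
    by rewrite mulmxA mulVmx // mul1mx.
  by rewrite SS -(mulmxA (invmx S)) mulVmx // mulmx1 mulVmx.
have nw : qform Sigma u = \sum_(i < p) w i 0 ^+ 2.
  rewrite -qform1 /qform uw trmx_mul symS -SSS !mulmxA //.
have q0 : 0 <= qform ((n%:R)^-1 *: (S *m X^T *m proj_idx R I *m X *m S)) w.
  rewrite qformZ key mulr_ge0 // ?invr_ge0 ?ler0n //.
  by apply: sumr_ge0 => i _; exact: sqr_ge0.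
have := qform_ge0_sq q0 hl.
rewrite qformZ key -nw.
move=> h; rewrite -mulrA mulrC -ler_pdivlMr ?ltr0n // mulrC.
by rewrite mulrC [X in _ <= X]mulrC.
Qed.


Lemma good_set n (F : 'I_n -> R) (alpha tau : R) :
  0 < tau -> 0 < alpha < 1 -> (forall i, 0 <= F i) -> \sum_(i < n) F i < n%:R * tau ->
  exists I : {set 'I_n}, (#|I|%:Z = Num.ceil (n%:R * (1 - alpha)))%R /\
     forall i, i \in I -> F i <= tau / alpha.
Proof.
move=> tau0 /andP [a0 a1] F0 hs.
set G := [set i | F i <= tau / alpha].
set B := ~: G.
have ta0 : 0 < tau / alpha by rewrite divr_gt0.
have hB : #|B|%:R * (tau / alpha) <= \sum_(i < n) F i.
  rewrite (bigID (fun i => i \in B)) /=.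
  apply: (@le_trans _ _ (\sum_(i in B) F i)); last first.
    by rewrite lerDl sumr_ge0.
  rewrite mulr_natl -sumr_const.
  by apply: ler_sum => i; rewrite /B /G !inE -ltNge => /ltW.
have hB2 : #|B|%:R < n%:R * alpha.
  have := le_lt_trans hB hs.
  rewrite -ltr_pdivlMr // => h; apply: (lt_le_trans h).
  rewrite le_eqVlt; apply/orP; left; apply/eqP; field.
  by rewrite ?gt_eqF.
have hC := cardsC G; rewrite card_ord in hC.
have cG : #|G| = (n - #|B|)%N by rewrite /B; lia.
have hG : n%:R * (1 - alpha) <= #|G|%:R.
  rewrite cG natrB; last by rewrite /B; lia.
  by rewrite mulrBr mulr1 lerB // ltW.
set c := Num.ceil (n%:R * (1 - alpha)).
have c0 : 0 <= c.
  rewrite ceil_ge0; apply: (@lt_le_trans _ _ 0) => //.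
  by rewrite mulr_ge0 // subr_ge0 ltW.
have cle : c <= #|G|%:Z by rewrite ceil_le_int.
have hk : (`|c| <= #|G|)%N by rewrite -lez_nat gez0_abs.
have [I [sIG cI]] := card_sub hk.
exists I; split; first by rewrite cI gez0_abs.
by move=> i /(fintype.subsetP sIG); rewrite inE.
Qed.

End C.

Section D.
Variable R : realType.

Lemma hess_bound K (Q : 'M[R]_(K.+1, K)) (y : 'rV[R]_K.+1) (u : 'rV[R]_K) (w : 'I_K -> R) (pm : R) :
  Q *m Q^T = centering_mx R K.+1 -> Q^T *m Q = 1%:M -> 0 <= pm ->
  (forall l, pm * S0 (fun l => (u *m Q^T) 0 l) <= expR ((u *m Q^T) 0 l)) ->
  pm * \sum_(j < K) w j ^+ 2 <=
  \sum_(j < K) \sum_(k < K) w j *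
     hessian (fun w0 : 'rV[R]_K => mlogit_loss y (w0 *m Q^T)) u j k * w k.
Proof.
move=> HQQ HQ pm0 hb.
rewrite [X in _ <= X](eq_bigr (fun j => \sum_(k < K) w j * ((\sum_(l < K.+1) expR ((u *m Q^T) 0 l) * (Q l k * Q l j)) / S0 (fun l => (u *m Q^T) 0 l)
     - (\sum_(l < K.+1) expR ((u *m Q^T) 0 l) * Q l j) * (\sum_(l < K.+1) expR ((u *m Q^T) 0 l) * Q l k) / S0 (fun l => (u *m Q^T) 0 l) ^+ 2) * w k)); last first.
  by move=> j _; apply: eq_bigr => k _; rewrite hess_entry.
rewrite quad_expand -(normQ w HQ) /S0.
apply: var_bound => //.
- by have := sexp_gt0 (fun l => (u *m Q^T) 0 l) (fun _ => 0) 0 (ltn0Sn K); rewrite /sexp; under eq_bigr do rewrite mulr0 addr0.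
- apply: sumv0; apply: colsum0; exact: HQQ.
Qed.

Lemma abs_le1sq (x : R) : `|x| <= 1 + x ^+ 2.
Proof.
case: (lerP 0 x) => hx; [rewrite ger0_norm // | rewrite ltr0_norm //]; nra.
Qed.

Lemma pm_bound m (a : 'I_m.+1 -> R) (T : R) :
  0 <= T -> \sum_(l < m.+1) a l ^+ 2 <= T ->
  forall l, expR (- (1 + T)) / (m.+1%:R * expR (1 + T)) * S0 a <= expR (a l).
Proof.
move=> T0 hs l.
have ha : forall k, `|a k| <= 1 + T.
  move=> k; apply: (le_trans (abs_le1sq (a k))); rewrite lerD2l.
  apply: le_trans hs; rewrite (bigD1 k) //= lerDl.
  by apply: sumr_ge0 => i _; exact: sqr_ge0.
have hS : S0 a <= m.+1%:R * expR (1 + T).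
  have -> : m.+1%:R * expR (1 + T) = \sum_(k < m.+1) expR (1 + T).
    by rewrite sumr_const card_ord mulr_natl.
  apply: ler_sum => k _; rewrite ler_expR.
  by apply: le_trans (ha k); exact: ler_norm.
apply: (@le_trans _ _ (expR (- (1 + T)))).
  rewrite -ler_pdivlMl; last by rewrite divr_gt0 ?expR_gt0 // mulr_gt0 ?ltr0n ?expR_gt0.
  rewrite invf_div -mulrA mulVf ?mulr1 //.
  by rewrite gt_eqF // expR_gt0.
rewrite ler_expR lerNl.
by apply: le_trans (ha l); rewrite -normrN; exact: ler_norm.
Qed.

End D.

Theorem lemmaS6p4 (R : realType) (K : nat) (tau alpha phi_lo : R) :
  (1 <= K)%N -> 0 < tau -> 0 < alpha < 1 -> 0 < phi_lo ->
  exists c1 : R, 0 < c1 /\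
  forall (n p : nat) (delta phi_hi : R)
    (Sigma Sinvhalf : 'M[R]_p) (X : 'M[R]_(n, p)) (Y : 'M[R]_(n, K.+1))
    (Bhat : 'M[R]_(p, K.+1)) (Q : 'M[R]_(K.+1, K)),
  (0 < n)%N -> 1 < delta -> 0 < phi_hi ->
  p%:R / n%:R <= delta^-1 -> delta^-1 < 1 - alpha ->
  (* Sigma positive definite, Sinvhalf = Sigma^{-1/2} (the p.d. square root of Sigma^{-1}) *)
  posdef Sigma -> posdef Sinvhalf -> Sinvhalf *m Sinvhalf = invmx Sigma ->
  (* Q Q^T = I - 11^T/(K+1),  Q^T Q = I_K *)
  Q *m Q^T = @centering_mx R K.+1 -> Q^T *m Q = 1%:M ->
  (* (Y, X) in U *)
  is_argmin_mlogit Y X Bhat ->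
  frob2 (X *m Bhat *m @centering_mx R K.+1) < n%:R * tau ->
  (* X in U_x *)
  (forall I : {set 'I_n}, (#|I|%:Z = Num.ceil (n%:R * (1 - alpha)))%R ->
     lambda_min_ge ((n%:R)^-1 *: (Sinvhalf *m X^T *m @proj_idx R n I *m X *m Sinvhalf))
                   (phi_lo ^+ 2)) ->
  opnorm_le ((Num.sqrt n%:R)^-1 *: (X *m Sinvhalf)) phi_hi ->
  loewner_ge
    ((n%:R)^-1 *: \sum_(i < n)
        (hessian (fun u : 'rV[R]_K => mlogit_loss (row i Y) (u *m Q^T))
                 (row i X *m Bhat *m Q)
         *t ((row i X)^T *m row i X)))
    (c1 *: ((1%:M : 'M[R]_K) *t Sigma)).
Proof.
move=> K1 tau0 ha phi0.
have /andP [a0 a1] := ha.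
set T := tau / alpha.
have T0 : 0 <= T by rewrite ltW // divr_gt0.
set pm := expR (- (1 + T)) / (K.+1%:R * expR (1 + T)).
have pm0 : 0 < pm by rewrite divr_gt0 ?expR_gt0 // mulr_gt0 ?ltr0n ?expR_gt0.
exists (pm * phi_lo ^+ 2); split; first by rewrite mulr_gt0 // exprn_gt0.
move=> n p delta phi_hi Sigma S X Y Bhat Q n0 _ _ _ _ pSg pS SS HQQ HQ _ hfrob hlam _.
set XBC := X *m Bhat *m centering_mx R K.+1.
have [I [cI hI]] := @good_set R n (fun i => \sum_(l < K.+1) XBC i l ^+ 2) alpha tau tau0 ha
   (fun i => sumr_ge0 _ (fun l _ => sqr_ge0 (XBC i l))) hfrob.
have hL := lammin_apply n0 pSg pS SS (hlam I cI).
have arow : forall i l, (row i X *m Bhat *m Q *m Q^T) 0 l = XBC i l.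
  by move=> i l; rewrite -mulmxA HQQ -!row_mul mxE.
move=> v.
rewrite qformB qformZ qformZ qform_sum qform_tens_id subr_ge0.
under [X in _ <= _ * X]eq_bigr => i _ do rewrite qform_tens1.
set H := fun i : 'I_n => hessian (fun u : 'rV[R]_K => mlogit_loss (row i Y) (u *m Q^T)) (row i X *m Bhat *m Q).
set Wv := fun (i : 'I_n) (j : 'I_K) => \sum_(l < p) v (mxtens_index (j, l)) 0 * (row i X) 0 l.
set U := fun j : 'I_K => \col_(l < p) v (mxtens_index (j, l)) 0.
set G := fun i : 'I_n => \sum_(j < K) \sum_(k < K) Wv i j * H i j k * Wv i k.
have HG0 : forall i, 0 <= G i.
  move=> i.
  have hb : forall l, 0 * S0 (fun l0 => (row i X *m Bhat *m Q *m Q^T) 0 l0) <= expR ((row i X *m Bhat *m Q *m Q^T) 0 l).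
    by move=> l; rewrite mul0r expR_ge0.
  by have := @hess_bound R K Q (row i Y) (row i X *m Bhat *m Q) (Wv i) 0 HQQ HQ (lexx 0) hb; rewrite mul0r.
have HGI : forall i, i \in I -> pm * \sum_(j < K) Wv i j ^+ 2 <= G i.
  move=> i iI; apply: hess_bound => //; first exact: ltW.
  move=> l.
  have -> : (fun l0 => (row i X *m Bhat *m Q *m Q^T) 0 l0) = (fun l0 => XBC i l0).
    by apply/funext => l0; rewrite arow.
  rewrite arow; apply: pm_bound => //.
  exact: hI.
have WX : forall i j, Wv i j = (X *m U j) i 0.
  move=> i j; rewrite /Wv mxE; apply: eq_bigr => l _; rewrite !mxE mulrC.
  done.
have hU : forall j, phi_lo ^+ 2 * qform Sigma (U j) <= (n%:R)^-1 * \sum_(i in I) (X *m U j) i 0 ^+ 2.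
  move=> j; rewrite ler_pdivlMl ?ltr0n // mulrA; exact: hL.
apply: (@le_trans _ _ (pm * ((n%:R)^-1 * \sum_(j < K) \sum_(i in I) (X *m U j) i 0 ^+ 2))).
  rewrite -mulrA; apply: ler_wpM2l; first exact: ltW.
  rewrite mulr_sumr mulr_sumr; apply: ler_sum => j _.
  exact: hU.
have -> : \sum_(j < K) \sum_(i in I) (X *m U j) i 0 ^+ 2 = \sum_(i in I) \sum_(j < K) Wv i j ^+ 2.
  rewrite exchange_big /=; apply: eq_bigr => i _; apply: eq_bigr => j _; by rewrite WX.
apply: (@le_trans _ _ ((n%:R)^-1 * \sum_(i in I) G i)).
  rewrite mulrCA ler_wpM2l ?invr_ge0 ?ler0n // mulr_sumr; apply: ler_sum => i iI.
  exact: HGI.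
rewrite ler_wpM2l ?invr_ge0 ?ler0n //.
rewrite [X in _ <= X](bigID (fun i => i \in I)) /= lerDl.
by apply: sumr_ge0 => i _; exact: (HG0 i).
Qed.
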